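(* Let $\nu\ge0$, $\epsilon\in\{0,1\}$, $\zeta$ real with $K:=1+\zeta\nu^2\neq0$, $s:=\zeta+\sqrt\nu$, and write $E=\exp(3\delta/(2K))$. Consider the system for functions $U,m,\gamma,\delta,\beta$ of $(X,T)$: $$m=\nu^2U_{XX}-\epsilon U,\qquad m_T=-m_XU-2mU_X+\tfrac23(1-\nu^{5/2})U_{XXX},$$ $$\gamma_X=-\frac{3}{4K}\gamma^2+m+\tfrac13\epsilon s,\qquad \gamma_T=\Big[\tfrac23K U_X-\tfrac23 s\gamma-\gamma U\Big]_X,$$ $$\delta_X=\gamma,\qquad \delta_T=\tfrac23KU_X-\tfrac23s\gamma-U\gamma,$$ $$\beta_X=\big[\nu^2m+\tfrac13\epsilon(\nu^{5/2}-1)\big]E,$$ $$\beta_T=\Big[-\tfrac13(\nu^{5/2}-1)(2m+\epsilon U)-\tfrac12\gamma^2+\tfrac29\epsilon(2\zeta+\zeta^2\nu^2-\nu^3+2\sqrt\nu)-\nu^2Um\Big]E,$$ whose equations are mutually compatible. Define $$Q_U=\gamma E,\quad Q_m=\Big[\nu^2m_X+\frac{3\nu^2\gamma}{K}m+\gamma\epsilon\frac{\nu^{5/2}-1}{K}\Big]E,\quad Q_\gamma=\big[\nu^2m+\tfrac13\epsilon(\nu^{5/2}-1)\big]E,$$ $$Q_\delta=\beta,\qquad Q_\beta=\nu^2\big[\nu^2m+\tfrac13\epsilon(\nu^{5/2}-1)\big]E^2+\frac{3}{4K}\beta^2 .$$ Then the evolutionary vector field $W=Q_U\partial_U+Q_m\partial_m+Q_\gamma\partial_\gamma+Q_\delta\partial_\delta+Q_\beta\partial_\beta$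 is a symmetry of the system: for every smooth solution $(U,m,\gamma,\delta,\beta)$, the deformed tuple $(U+\tau Q_U,\,m+\tau Q_m,\,\gamma+\tau Q_\gamma,\,\delta+\tau Q_\delta,\,\beta+\tau Q_\beta)$ (with the $Q$'s evaluated on the solution) satisfies all equations of the system up to terms of order $\tau^2$. *)

(* Defs.v *)
From Stdlib Require Import Reals List.
From Coquelicot Require Import Coquelicot.
Open Scope R_scope.

Definition dX (f : R -> R -> R) : R -> R -> R :=
  fun x t => Derive (fun y => f y t) x.
Definition dT (f : R -> R -> R) : R -> R -> R :=
  fun x t => Derive (fun s => f x s) t.

Fixpoint pd (w : list bool) (f : R -> R -> R) : R -> R -> R :=
  match w with
  | nil => f
  | true :: w' => dX (pd w' f)
  | false :: w' => dT (pd w' f)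
  end.

Definition smooth2 (f : R -> R -> R) : Prop :=
  forall w : list bool,
    (forall x t, ex_derive (fun y => pd w f y t) x /\
                 ex_derive (fun s => pd w f x s) t) /\
    (forall p : R * R, continuous (fun q : R * R => pd w f (fst q) (snd q)) p).

Section Sys.
Variables nu eps zeta : R.

Definition Kc : R := 1 + zeta * nu ^ 2.
Definition sc : R := zeta + sqrt nu.
(* nu^(5/2) for nu >= 0 *)
Definition nu52 : R := nu ^ 2 * sqrt nu.

Definition Ef (d : R -> R -> R) : R -> R -> R :=
  fun x t => exp (3 * d x t / (2 * Kc)).

Inductive eqn := Em | EmT | EgX | EgT | EdX | EdT | EbX | EbT.

Definition residual (e : eqn) (U m g d b : R -> R -> R) : R -> R -> R :=
  fun x t =>
  match e with
  | Em => m x t - (nu ^ 2 * dX (dX U) x t - eps * U x t)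
  | EmT => dT m x t - (- dX m x t * U x t - 2 * m x t * dX U x t
                       + 2 / 3 * (1 - nu52) * dX (dX (dX U)) x t)
  | EgX => dX g x t - (- (3 / (4 * Kc)) * (g x t) ^ 2 + m x t + 1 / 3 * eps * sc)
  | EgT => dT g x t -
           dX (fun y s => 2 / 3 * Kc * dX U y s - 2 / 3 * sc * g y s - g y s * U y s) x t
  | EdX => dX d x t - g x t
  | EdT => dT d x t - (2 / 3 * Kc * dX U x t - 2 / 3 * sc * g x t - U x t * g x t)
  | EbX => dX b x t - (nu ^ 2 * m x t + 1 / 3 * eps * (nu52 - 1)) * Ef d x t
  | EbT => dT b x t -
           (- 1 / 3 * (nu52 - 1) * (2 * m x t + eps * U x t) - 1 / 2 * (g x t) ^ 2
            + 2 / 9 * eps * (2 * zeta + zeta ^ 2 * nu ^ 2 - nu ^ 3 + 2 * sqrt nu)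
            - nu ^ 2 * U x t * m x t) * Ef d x t
  end.

Definition is_solution (U m g d b : R -> R -> R) : Prop :=
  forall e x t, residual e U m g d b x t = 0.

Definition QU (U m g d b : R -> R -> R) : R -> R -> R :=
  fun x t => g x t * Ef d x t.
Definition Qm (U m g d b : R -> R -> R) : R -> R -> R :=
  fun x t => (nu ^ 2 * dX m x t + 3 * nu ^ 2 * g x t / Kc * m x t
              + g x t * eps * (nu52 - 1) / Kc) * Ef d x t.
Definition Qg (U m g d b : R -> R -> R) : R -> R -> R :=
  fun x t => (nu ^ 2 * m x t + 1 / 3 * eps * (nu52 - 1)) * Ef d x t.
Definition Qd (U m g d b : R -> R -> R) : R -> R -> R := b.
Definition Qb (U m g d b : R -> R -> R) : R -> R -> R :=
  fun x t => nu ^ 2 * (nu ^ 2 * m x t + 1 / 3 * eps * (nu52 - 1)) * (Ef d x t) ^ 2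
             + 3 / (4 * Kc) * (b x t) ^ 2.

Definition deform (tau : R) (f q : R -> R -> R) : R -> R -> R :=
  fun x t => f x t + tau * q x t.

End Sys.

(* Main.v *)
Require Import Defs.
From Stdlib Require Import Reals Lra List FunctionalExtensionality.
From Coquelicot Require Import Coquelicot.
Open Scope R_scope.

Lemma exX_of (f : R -> R -> R) : smooth2 f -> forall w x t, ex_derive (fun y => pd w f y t) x.
Proof. intros H w x t. exact (proj1 (proj1 (H w) x t)). Qed.
Lemma exT_of (f : R -> R -> R) : smooth2 f -> forall w x t, ex_derive (fun s => pd w f x s) t.
Proof. intros H w x t. exact (proj2 (proj1 (H w) x t)). Qed.

Lemma schwarz_of (f : R -> R -> R) : smooth2 f -> forall x t,
  dX (dT f) x t = dT (dX f) x t.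
Proof.
intros H x t. unfold dX, dT.
apply (Schwarz f x t).
- exists (mkposreal 1 Rlt_0_1). intros u v _ _.
  split; [exact (exX_of f H nil u v)|].
  split; [exact (exT_of f H nil u v)|].
  split; [exact (exX_of f H (false::nil) u v)|].
  exact (exT_of f H (true::nil) u v).
- apply continuity_2d_pt_filterlim. exact (proj2 (H (true::false::nil)) (x,t)).
- apply continuity_2d_pt_filterlim. exact (proj2 (H (false::true::nil)) (x,t)).
Qed.

Lemma exp_taylor2 y : Rabs y <= 1/2 -> Rabs (exp y - 1 - y) <= 2 * y ^ 2.
Proof.
intros Hy. apply Rabs_le_between in Hy.
assert (H1 := exp_ineq1_le y). assert (H2 := exp_ineq1_le (- y)).
assert (He : exp y * exp (- y) = 1) by (rewrite <- exp_plus; replace (y + - y) with 0 by ring; apply exp_0).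
assert (Hp := exp_pos y).
assert (H3 : exp y * (1 - y) <= 1) by nra.
rewrite Rabs_pos_eq by lra.
nra.
Qed.

Lemma finish_poly (r : R -> R) : (forall tau, r tau = tau ^ 2 * r 1) ->
  exists C eta : R, 0 < eta /\ forall tau, Rabs tau < eta -> Rabs (r tau) <= C * tau ^ 2.
Proof.
intros H. exists (Rabs (r 1)), 1. split; [lra|]. intros tau _.
rewrite H, Rabs_mult, Rmult_comm. rewrite (Rabs_pos_eq (tau^2)) by (apply pow2_ge_0). lra.
Qed.

Lemma finish_exp (r A L : R -> R) (kb L0 L1 L2 C0 C1 : R) :
  (forall tau, r tau = A tau - L tau * exp (tau * kb)) ->
  (forall tau, L tau = L0 + tau * L1 + tau ^ 2 * L2) ->
  (forall tau, A tau - L tau * (1 + tau * kb) = tau ^ 2 * (C0 + tau * C1)) ->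
  exists C eta : R, 0 < eta /\ forall tau, Rabs tau < eta -> Rabs (r tau) <= C * tau ^ 2.
Proof.
intros Hr HL HA.
exists (Rabs C0 + Rabs C1 + (Rabs L0 + Rabs L1 + Rabs L2) * (2 * kb ^ 2)), (/ (2 * (Rabs kb + 1))).
assert (Hkb := Rabs_pos kb).
split. { apply Rinv_0_lt_compat; lra. }
intros tau Ht.
assert (Hpos : 0 < 2 * (Rabs kb + 1)) by lra.
assert (Ht1 : Rabs tau * (2 * (Rabs kb + 1)) < 1).
{ apply (Rmult_lt_compat_r (2 * (Rabs kb + 1))) in Ht; auto.
  rewrite Rinv_l in Ht; lra. }
assert (Htau0 := Rabs_pos tau).
assert (Hy : Rabs (tau * kb) <= 1/2).
{ rewrite Rabs_mult. nra. }
assert (Hlt1 : Rabs tau <= 1) by nra.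
assert (HT := exp_taylor2 _ Hy).
replace (r tau) with ((A tau - L tau * (1 + tau * kb)) - L tau * (exp (tau * kb) - 1 - tau * kb))
  by (rewrite Hr; ring).
rewrite HA.
eapply Rle_trans; [apply Rabs_triang|].
rewrite Rabs_Ropp, !Rabs_mult.
rewrite (Rabs_pos_eq (tau^2)) by (apply pow2_ge_0).
assert (Hsqt : Rabs (tau ^ 2) = Rabs tau * Rabs tau) by (rewrite <- Rabs_mult; f_equal; ring).
assert (HLb : Rabs (L tau) <= Rabs L0 + Rabs L1 + Rabs L2).
{ rewrite HL. eapply Rle_trans; [apply Rabs_triang|]. rewrite Rabs_mult.
  eapply Rle_trans; [apply Rplus_le_compat_r; apply Rabs_triang|]. rewrite Rabs_mult, Hsqt.
  assert (Hq := Rabs_pos L1). assert (Hq2 := Rabs_pos L2).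
  assert (Rabs tau * Rabs L1 <= Rabs L1) by nra.
  assert (Rabs tau * Rabs tau <= 1) by nra.
  assert (Rabs tau * Rabs tau * Rabs L2 <= Rabs L2) by nra. lra. }
assert (HCb : Rabs (C0 + tau * C1) <= Rabs C0 + Rabs C1).
{ eapply Rle_trans; [apply Rabs_triang|]. rewrite Rabs_mult.
  assert (Hq := Rabs_pos C1). nra. }
assert (Hsq : (tau * kb) ^ 2 = tau ^ 2 * kb ^ 2) by ring.
rewrite Hsq in HT.
assert (0 <= tau ^ 2) by apply pow2_ge_0.
assert (0 <= kb ^ 2) by apply pow2_ge_0.
assert (Rabs (L tau) * Rabs (exp (tau * kb) - 1 - tau * kb) <= (Rabs L0 + Rabs L1 + Rabs L2) * (2 * (tau ^ 2 * kb ^ 2))).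
{ apply Rmult_le_compat; auto using Rabs_pos. }
assert (tau ^ 2 * Rabs (C0 + tau * C1) <= tau ^ 2 * (Rabs C0 + Rabs C1)).
{ apply Rmult_le_compat_l; auto. }
nra.
Qed.

Lemma dX_defF tau (f q : R -> R -> R) :
  (forall x t, ex_derive (fun y => f y t) x) -> (forall x t, ex_derive (fun y => q y t) x) ->
  dX (deform tau f q) = deform tau (dX f) (dX q).
Proof.
intros Hf Hq. apply functional_extensionality; intro x; apply functional_extensionality; intro t.
unfold dX, deform. apply is_derive_unique. auto_derive; [split; [apply Hf|split; [apply Hq|auto]]|]. ring.
Qed.
Lemma dT_defF tau (f q : R -> R -> R) :
  (forall x t, ex_derive (fun s => f x s) t) -> (forall x t, ex_derive (fun s => q x s) t) ->
  dT (deform tau f q) = deform tau (dT f) (dT q).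
Proof.
intros Hf Hq. apply functional_extensionality; intro x; apply functional_extensionality; intro t.
unfold dT, deform. apply is_derive_unique. auto_derive; [split; [apply Hf|split; [apply Hq|auto]]|]. ring.
Qed.

Ltac fold_d := repeat match goal with
  | |- context [Derive (fun y => ?f y ?t) ?x] => change (Derive (fun y => f y t) x) with (dX f x t)
  | |- context [Derive (fun s => ?f ?x s) ?t] => change (Derive (fun s => f x s) t) with (dT f x t)
  end.

Ltac exd1 := first
  [ refine (exX_of _ _ nil _ _); assumption
  | refine (exX_of _ _ (true::nil) _ _); assumption
  | refine (exX_of _ _ (true::true::nil) _ _); assumption
  | refine (exX_of _ _ (true::true::true::nil) _ _); assumption
  | refine (exX_of _ _ (true::true::true::true::nil) _ _); assumption
  | refine (exX_of _ _ (false::nil) _ _); assumption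
  | refine (exT_of _ _ nil _ _); assumption
  | refine (exT_of _ _ (true::nil) _ _); assumption
  | refine (exT_of _ _ (true::true::nil) _ _); assumption
  | refine (exT_of _ _ (true::true::true::nil) _ _); assumption ].
Ltac exd := repeat split; try exd1.

Section S.
Variables nu eps zeta : R.
Variables U m g d b : R -> R -> R.
Hypothesis Hnu : 0 <= nu.
Hypothesis Heps : eps = 0 \/ eps = 1.
Hypothesis HK : Kc nu zeta <> 0.
Hypothesis HU : smooth2 U.
Hypothesis Hm : smooth2 m.
Hypothesis Hg : smooth2 g.
Hypothesis Hd : smooth2 d.
Hypothesis Hb : smooth2 b.
Hypothesis Hsol : is_solution nu eps zeta U m g d b.

Notation K := (Kc nu zeta).
Notation E := (Ef nu zeta d).

Lemma S5 x t : dX d x t = g x t.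
Proof. generalize (Hsol EdX x t); simpl; lra. Qed.
Lemma S3 x t : dX g x t = - (3 / (4 * K)) * (g x t) ^ 2 + m x t + 1 / 3 * eps * sc nu zeta.
Proof. generalize (Hsol EgX x t); simpl; lra. Qed.


Lemma S1 x t : m x t = nu ^ 2 * dX (dX U) x t - eps * U x t.
Proof. generalize (Hsol Em x t); simpl; lra. Qed.
Lemma S2 x t : dT m x t = - dX m x t * U x t - 2 * m x t * dX U x t
                       + 2 / 3 * (1 - nu52 nu) * dX (dX (dX U)) x t.
Proof. generalize (Hsol EmT x t); simpl; lra. Qed.
Lemma S4 x t : dT g x t = 2 / 3 * K * dX (dX U) x t - 2 / 3 * sc nu zeta * dX g x t
   - (dX g x t * U x t + g x t * dX U x t).
Proof. generalize (Hsol EgT x t); simpl. intros H.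
 assert (H2 : dX (fun y s => 2 / 3 * K * dX U y s - 2 / 3 * sc nu zeta * g y s - g y s * U y s) x t
   = 2 / 3 * K * dX (dX U) x t - 2 / 3 * sc nu zeta * dX g x t
   - (dX g x t * U x t + g x t * dX U x t)).
 { unfold dX at 1. apply is_derive_unique. auto_derive; [exd|]. fold_d. ring. }
 lra. Qed.
Lemma S6 x t : dT d x t = 2 / 3 * K * dX U x t - 2 / 3 * sc nu zeta * g x t - U x t * g x t.
Proof. generalize (Hsol EdT x t); simpl; lra. Qed.
Lemma S7 x t : dX b x t = (nu ^ 2 * m x t + 1 / 3 * eps * (nu52 nu - 1)) * E x t.
Proof. generalize (Hsol EbX x t); simpl; lra. Qed.
Lemma S8 x t : dT b x t =
           (- 1 / 3 * (nu52 nu - 1) * (2 * m x t + eps * U x t) - 1 / 2 * (g x t) ^ 2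
            + 2 / 9 * eps * (2 * zeta + zeta ^ 2 * nu ^ 2 - nu ^ 3 + 2 * sqrt nu)
            - nu ^ 2 * U x t * m x t) * E x t.
Proof. generalize (Hsol EbT x t); simpl; lra. Qed.

Lemma dX_ext (f : R -> R -> R) (h : R -> R) x t :
  (forall y, f y t = h y) -> dX f x t = Derive h x.
Proof. intros H. unfold dX. apply Derive_ext. exact H. Qed.

Lemma S1X x t : dX m x t = nu ^ 2 * dX (dX (dX U)) x t - eps * dX U x t.
Proof. erewrite dX_ext by (intro y; apply S1). apply is_derive_unique.
  auto_derive; [exd|]. fold_d. ring. Qed.
Lemma S1XX x t : dX (dX m) x t = nu ^ 2 * dX (dX (dX (dX U))) x t - eps * dX (dX U) x t.
Proof. erewrite dX_ext by (intro y; apply S1X). apply is_derive_unique.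
  auto_derive; [exd|]. fold_d. ring. Qed.
Lemma mXT x t : dT (dX m) x t = - (dX (dX m) x t * U x t + dX m x t * dX U x t)
   - 2 * (dX m x t * dX U x t + m x t * dX (dX U) x t)
   + 2 / 3 * (1 - nu52 nu) * dX (dX (dX (dX U))) x t.
Proof. rewrite <- (schwarz_of m Hm). erewrite dX_ext by (intro y; apply S2).
  apply is_derive_unique. auto_derive; [exd|]. fold_d. ring. Qed.

Lemma QU_X x t : dX (QU nu zeta U m g d b) x t =
  (3/(4*K) * g x t ^ 2 + m x t + 1/3*eps*sc nu zeta) * E x t.
Proof.
unfold QU at 1, Ef, dX at 1. apply is_derive_unique. auto_derive; [exd|].
fold_d. rewrite S3, S5. unfold Rdiv. field. auto.
Qed.
Lemma QU_XX x t : dX (dX (QU nu zeta U m g d b)) x t =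
  (3/K * g x t * m x t + 3/K * (1/3*eps*sc nu zeta) * g x t + dX m x t) * E x t.
Proof.
erewrite dX_ext by (intro y; apply QU_X). unfold Ef. apply is_derive_unique.
auto_derive; [exd|].
fold_d. rewrite S3, S5. unfold Rdiv. field. auto.
Qed.
Lemma QU_XXX x t : dX (dX (dX (QU nu zeta U m g d b))) x t =
  (3/K * (m x t + 1/3*eps*sc nu zeta) * (3/(4*K) * g x t ^ 2 + m x t + 1/3*eps*sc nu zeta)
   + 9/(2*K) * g x t * dX m x t + dX (dX m) x t) * E x t.
Proof.
erewrite dX_ext by (intro y; apply QU_XX). unfold Ef. apply is_derive_unique.
auto_derive; [exd|].
fold_d. rewrite S3, S5. unfold Rdiv. field. auto.
Qed.

Lemma exQU x t : ex_derive (fun y => QU nu zeta U m g d b y t) x.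
Proof. unfold QU, Ef. auto_derive. exd. Qed.
Lemma exQU_X x t : ex_derive (fun y => dX (QU nu zeta U m g d b) y t) x.
Proof. eapply ex_derive_ext. { intro y. symmetry. apply QU_X. }
  unfold Ef. auto_derive. exd. Qed.
Lemma exQU_XX x t : ex_derive (fun y => dX (dX (QU nu zeta U m g d b)) y t) x.
Proof. eapply ex_derive_ext. { intro y. symmetry. apply QU_XX. }
  unfold Ef. auto_derive. exd. Qed.
Lemma exQm_X x t : ex_derive (fun y => Qm nu eps zeta U m g d b y t) x.
Proof. unfold Qm, Ef. auto_derive. exd. Qed.
Lemma exQm_T x t : ex_derive (fun s => Qm nu eps zeta U m g d b x s) t.
Proof. unfold Qm, Ef. auto_derive. exd. Qed.
Lemma exQg_X x t : ex_derive (fun y => Qg nu eps zeta U m g d b y t) x.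
Proof. unfold Qg, Ef. auto_derive. exd. Qed.
Lemma exQg_T x t : ex_derive (fun s => Qg nu eps zeta U m g d b x s) t.
Proof. unfold Qg, Ef. auto_derive. exd. Qed.
Lemma exQb_X x t : ex_derive (fun y => Qb nu eps zeta U m g d b y t) x.
Proof. unfold Qb, Ef. auto_derive. exd. Qed.
Lemma exQb_T x t : ex_derive (fun s => Qb nu eps zeta U m g d b x s) t.
Proof. unfold Qb, Ef. auto_derive. exd. Qed.

Lemma Qm_X x t : dX (Qm nu eps zeta U m g d b) x t =
  (nu ^ 2 * dX (dX m) x t + 3 * nu ^ 2 / K * (dX g x t * m x t + g x t * dX m x t)
   + dX g x t * eps * (nu52 nu - 1) / K) * E x t
  + Qm nu eps zeta U m g d b x t * (3 / (2 * K) * g x t).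
Proof.
unfold Qm, Ef, dX at 1. apply is_derive_unique. auto_derive; [exd|].
fold_d. rewrite S5. unfold Rdiv. field. auto.
Qed.
Lemma Qm_T x t : dT (Qm nu eps zeta U m g d b) x t =
  (nu ^ 2 * dT (dX m) x t + 3 * nu ^ 2 / K * (dT g x t * m x t + g x t * dT m x t)
   + dT g x t * eps * (nu52 nu - 1) / K) * E x t
  + Qm nu eps zeta U m g d b x t * (3 / (2 * K) * dT d x t).
Proof.
unfold Qm, Ef, dT at 1. apply is_derive_unique. auto_derive; [exd|].
fold_d. unfold Rdiv. field. auto.
Qed.
Lemma Qg_X x t : dX (Qg nu eps zeta U m g d b) x t =
  nu ^ 2 * dX m x t * E x t + Qg nu eps zeta U m g d b x t * (3 / (2 * K) * g x t).
Proof.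
unfold Qg, Ef, dX at 1. apply is_derive_unique. auto_derive; [exd|].
fold_d. rewrite S5. unfold Rdiv. field. auto.
Qed.
Lemma Qg_T x t : dT (Qg nu eps zeta U m g d b) x t =
  nu ^ 2 * dT m x t * E x t + Qg nu eps zeta U m g d b x t * (3 / (2 * K) * dT d x t).
Proof.
unfold Qg, Ef, dT at 1. apply is_derive_unique. auto_derive; [exd|].
fold_d. unfold Rdiv. field. auto.
Qed.
Lemma Qb_X x t : dX (Qb nu eps zeta U m g d b) x t =
  nu ^ 2 * nu ^ 2 * dX m x t * E x t ^ 2
  + nu ^ 2 * (nu ^ 2 * m x t + 1 / 3 * eps * (nu52 nu - 1)) * (3 / K * g x t) * E x t ^ 2
  + 3 / (2 * K) * b x t * dX b x t.
Proof.
unfold Qb, Ef, dX at 1. apply is_derive_unique. auto_derive; [exd|].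
fold_d. rewrite S5. unfold Rdiv. field. auto.
Qed.
Lemma Qb_T x t : dT (Qb nu eps zeta U m g d b) x t =
  nu ^ 2 * nu ^ 2 * dT m x t * E x t ^ 2
  + nu ^ 2 * (nu ^ 2 * m x t + 1 / 3 * eps * (nu52 nu - 1)) * (3 / K * dT d x t) * E x t ^ 2
  + 3 / (2 * K) * b x t * dT b x t.
Proof.
unfold Qb, Ef, dT at 1. apply is_derive_unique. auto_derive; [exd|].
fold_d. unfold Rdiv. field. auto.
Qed.

Notation RES e tau := (residual nu eps zeta e
                (deform tau U (QU nu zeta U m g d b))
                (deform tau m (Qm nu eps zeta U m g d b))
                (deform tau g (Qg nu eps zeta U m g d b))
                (deform tau d (Qd U m g d b))
                (deform tau b (Qb nu eps zeta U m g d b))).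

Ltac exd2 := intros; unfold Qd; match goal with
  | |- ex_derive (fun y => QU _ _ _ _ _ _ _ y _) _ => apply exQU
  | |- ex_derive (fun y => dX (QU _ _ _ _ _ _ _) y _) _ => apply exQU_X
  | |- ex_derive (fun y => dX (dX (QU _ _ _ _ _ _ _)) y _) _ => apply exQU_XX
  | |- ex_derive (fun y => Qm _ _ _ _ _ _ _ _ y _) _ => apply exQm_X
  | |- ex_derive (fun s => Qm _ _ _ _ _ _ _ _ _ s) _ => apply exQm_T
  | |- ex_derive (fun y => Qg _ _ _ _ _ _ _ _ y _) _ => apply exQg_X
  | |- ex_derive (fun s => Qg _ _ _ _ _ _ _ _ _ s) _ => apply exQg_T
  | |- ex_derive (fun y => Qb _ _ _ _ _ _ _ _ y _) _ => apply exQb_X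
  | |- ex_derive (fun s => Qb _ _ _ _ _ _ _ _ _ s) _ => apply exQb_T
  | _ => exd1 end.

Ltac split_deriv := cbv beta iota delta [residual];
  rewrite ?dX_defF by exd2; rewrite ?dX_defF by exd2; rewrite ?dX_defF by exd2;
  rewrite ?dT_defF by exd2.

Ltac alg :=
  rewrite ?QU_XXX, ?QU_XX, ?QU_X, ?Qm_T, ?Qm_X, ?Qg_T, ?Qg_X, ?Qb_T, ?Qb_X;
  cbv beta delta [QU Qm Qg Qd Qb];
  rewrite ?mXT, ?S2, ?S4, ?S6, ?S8, ?S7, ?S1XX, ?S3, ?S1X, ?S5, ?S1;
  let HK' := fresh in assert (HK' := HK);
  unfold Kc, sc, nu52 in *;
  let Hs := fresh in assert (Hs := sqrt_sqrt nu Hnu);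
  let sn := fresh "sn" in set (sn := sqrt nu) in *; clearbody sn;
  rewrite <- Hs in *;
  destruct Heps as [He|He]; rewrite He; field; auto.

Lemma resEm tau x t : RES Em tau x t = tau ^ 2 * RES Em 1 x t.
Proof. split_deriv. unfold deform. alg. Qed.
Lemma resEmT tau x t : RES EmT tau x t = tau ^ 2 * RES EmT 1 x t.
Proof. split_deriv. unfold deform. alg. Qed.
Lemma resEgX tau x t : RES EgX tau x t = tau ^ 2 * RES EgX 1 x t.
Proof. split_deriv. unfold deform. alg. Qed.
Lemma resEdX tau x t : RES EdX tau x t = tau ^ 2 * RES EdX 1 x t.
Proof. split_deriv. unfold deform. alg. Qed.
Lemma resEdT tau x t : RES EdT tau x t = tau ^ 2 * RES EdT 1 x t.
Proof. split_deriv. unfold deform. alg. Qed.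
Lemma LgT tau x t : dX (fun y s => 2 / 3 * K * deform tau (dX U) (dX (QU nu zeta U m g d b)) y s
    - 2 / 3 * sc nu zeta * deform tau g (Qg nu eps zeta U m g d b) y s
    - deform tau g (Qg nu eps zeta U m g d b) y s * deform tau U (QU nu zeta U m g d b) y s) x t
  = 2 / 3 * K * (dX (dX U) x t + tau * dX (dX (QU nu zeta U m g d b)) x t)
    - 2 / 3 * sc nu zeta * (dX g x t + tau * dX (Qg nu eps zeta U m g d b) x t)
    - ((dX g x t + tau * dX (Qg nu eps zeta U m g d b) x t) * (U x t + tau * QU nu zeta U m g d b x t)
       + (g x t + tau * Qg nu eps zeta U m g d b x t) * (dX U x t + tau * dX (QU nu zeta U m g d b) x t)).
Proof.
unfold dX at 1. unfold deform. apply is_derive_unique. auto_derive.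
- repeat split; exd2.
- fold_d. ring.
Qed.
Lemma resEgT tau x t : RES EgT tau x t = tau ^ 2 * RES EgT 1 x t.
Proof. split_deriv. rewrite !LgT. unfold deform. alg. Qed.
Lemma Edef tau x t : Ef nu zeta (deform tau d (Qd U m g d b)) x t =
  E x t * exp (tau * (3 * b x t / (2 * K))).
Proof. unfold Ef, deform, Qd. rewrite <- exp_plus. f_equal. field. auto. Qed.

Ltac fin_exp A L kb :=
  let P := constr:(fun tau => A tau - L tau * (1 + tau * kb)) in
  apply (finish_exp _ A L kb (L 0) ((L 1 - L (-1)) / 2) ((L 1 + L (-1)) / 2 - L 0)
           ((P 1 + P (-1)) / 2) ((P 1 - P (-1)) / 2));
  [ intro tau; cbv beta; split_deriv; rewrite Edef; unfold deform; ring
  | intro tau; cbv beta; field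
  | intro tau; cbv beta; alg ].

Lemma resEbX x t : exists C eta : R, 0 < eta /\ forall tau, Rabs tau < eta ->
  Rabs (RES EbX tau x t) <= C * tau ^ 2.
Proof.
fin_exp (fun tau => dX b x t + tau * dX (Qb nu eps zeta U m g d b) x t)
  (fun tau => (nu ^ 2 * (m x t + tau * Qm nu eps zeta U m g d b x t) + 1 / 3 * eps * (nu52 nu - 1)) * E x t)
  (3 * b x t / (2 * K)).
Qed.
Lemma resEbT x t : exists C eta : R, 0 < eta /\ forall tau, Rabs tau < eta ->
  Rabs (RES EbT tau x t) <= C * tau ^ 2.
Proof.
fin_exp (fun tau => dT b x t + tau * dT (Qb nu eps zeta U m g d b) x t)
  (fun tau => (- 1 / 3 * (nu52 nu - 1) * (2 * (m x t + tau * Qm nu eps zeta U m g d b x t)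
       + eps * (U x t + tau * QU nu zeta U m g d b x t))
     - 1 / 2 * (g x t + tau * Qg nu eps zeta U m g d b x t) ^ 2
     + 2 / 9 * eps * (2 * zeta + zeta ^ 2 * nu ^ 2 - nu ^ 3 + 2 * sqrt nu)
     - nu ^ 2 * (U x t + tau * QU nu zeta U m g d b x t) * (m x t + tau * Qm nu eps zeta U m g d b x t)) * E x t)
  (3 * b x t / (2 * K)).
Qed.
End S.

Theorem theorem6 (nu eps zeta : R) (U m g d b : R -> R -> R) :
  0 <= nu ->
  (eps = 0 \/ eps = 1) ->
  Kc nu zeta <> 0 ->
  smooth2 U -> smooth2 m -> smooth2 g -> smooth2 d -> smooth2 b ->
  is_solution nu eps zeta U m g d b ->
  forall (e : eqn) (x t : R),
    exists C eta : R, 0 < eta /\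
      forall tau : R, Rabs tau < eta ->
        Rabs (residual nu eps zeta e
                (deform tau U (QU nu zeta U m g d b))
                (deform tau m (Qm nu eps zeta U m g d b))
                (deform tau g (Qg nu eps zeta U m g d b))
                (deform tau d (Qd U m g d b))
                (deform tau b (Qb nu eps zeta U m g d b)) x t)
        <= C * tau ^ 2.
Proof.
intros Hnu Heps HK HU Hm Hg Hd Hb Hsol e x t.
destruct e.
- apply finish_poly; intro tau; eapply resEm; eauto.
- apply finish_poly; intro tau; eapply resEmT; eauto.
- apply finish_poly; intro tau; eapply resEgX; eauto.
- apply finish_poly; intro tau; eapply resEgT; eauto.
- apply finish_poly; intro tau; eapply resEdX; eauto.
- apply finish_poly; intro tau; eapply resEdT; eauto.
- eapply resEbX; eauto.
- eapply resEbT; eauto.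
Qed.
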